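(* Let $P$, $G$, $G_0$ be as in the context, and set $R(z)=(G-z)^{-1}$, $R_0(z)=(G_0-z)^{-1}$, $V=G_0-G$. For every $k\in\mathbb N$, $k\geq1$, and $z\in\mathbb C\setminus\mathbb R$, $R(z)^k$ is a finite sum of terms of the form \[M_0VM_1V\cdots VM_n,\] where $M_0=R_0(z)^{\alpha_0}$, $M_n=R_0(z)^{\alpha_n}$, and for $1\leq j\leq n-1$ either $M_j=R(z)$ (in which case one sets $\alpha_j=1$) or $M_j=R_0(z)^{\alpha_j}$; moreover the integers $\alpha_j$ satisfy, for all $j\in\{0,\dots,n\}$, $0<\alpha_j\leq k$, $\alpha_j+\alpha_{j+1}\leq k+1$ (for $j<n$), and $\sum_{j=0}^n\alpha_j=n+k$.
   Context: On $\mathbb R^d$, $P=-b\,\mathrm{div}(A\nabla b)$ with smooth real $b\geq\delta>0$ and smooth real symmetric $A\geq\delta I_d$, whose coefficients satisfy $|\partial^\alpha(A-I_d)|+|\partial^\alpha(b-1)|\lesssim\langle x\rangle^{-\rho-|\alpha|}$ for some $\rho>0$. $G=i\begin{pmatrix}0&1\\-P&0\end{pmatrix}$, $G_0=i\begin{pmatrix}0&1\\ \Delta&0\end{pmatrix}$, so $V=G_0-G=i\begin{pmatrix}0&0\\P+\Delta&0\end{pmatrix}$, a bounded operator $H^{s+1}\oplus H^s\to H^s\oplus H^{s-1}$. *)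

(* Defs.v *)
From mathcomp Require Import all_boot all_order all_algebra.
Set Implicit Arguments. Unset Strict Implicit. Unset Printing Implicit Defensive.
Import Order.TTheory GRing.Theory Num.Theory.
Local Open Scope ring_scope.

(* A factor M_j of a word M_0 V M_1 V ... V M_n:
   FR0 a  stands for R_0(z)^a,   FR stands for R(z) (with alpha = 1). *)
Inductive factor := FR0 of nat | FR.

Definition alpha (f : factor) : nat :=
  match f with FR0 a => a | FR => 1%N end.

Definition is_R0 (f : factor) : bool :=
  match f with FR0 _ => true | FR => false end.

Definition valid_word (k : nat) (ms : seq factor) : Prop :=
  [/\ ms <> [::],
      is_R0 (head FR ms) /\ is_R0 (last FR ms),
      (forall j, (j < size ms)%N -> (0 < alpha (nth FR ms j) <= k)%N),
      (forall j, (j.+1 < size ms)%N ->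
         (alpha (nth FR ms j) + alpha (nth FR ms j.+1) <= k.+1)%N)
    & sumn (map alpha ms) = ((size ms).-1 + k)%N].

Section Eval.
Variable A : pzRingType.
Variables (R R0 V : A).

Definition eval_factor (f : factor) : A :=
  match f with FR0 a => R0 ^+ a | FR => R end.

Fixpoint eval_word (ms : seq factor) : A :=
  match ms with
  | [::] => 1
  | [:: m] => eval_factor m
  | m :: ms' => eval_factor m * V * eval_word ms'
  end.
End Eval.

(* Main.v *)
Require Import Defs.
From mathcomp Require Import all_boot all_order all_algebra.
From mathcomp Require Import zify.
From Stdlib Require Import Lia.
Import Order.TTheory GRing.Theory Num.Theory.
Local Open Scope ring_scope.

Section Aux.
Variable A : pzRingType.
Variables (R R0 V : A).

Lemma eval_cat (w v : seq factor) : w <> [::] -> v <> [::] ->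
  eval_word R R0 V (w ++ v) = eval_word R R0 V w * V * eval_word R R0 V v.
Proof.
elim: w => [//|m [|m' w'] IH] _ hv.
  by case: v hv IH.
rewrite cat_cons.
change (eval_factor R R0 m * V * eval_word R R0 V ((m' :: w') ++ v) =
  eval_factor R R0 m * V * eval_word R R0 V (m' :: w') * V * eval_word R R0 V v).
by rewrite IH // !mulrA.
Qed.

Lemma eval_inc (w' : seq factor) a :
  eval_word R R0 V (w' ++ [:: FR0 a.+1]) = eval_word R R0 V (w' ++ [:: FR0 a]) * R0.
Proof.
case: w' => [|m w']; first by rewrite /= exprSr.
rewrite !eval_cat //= exprSr.
by rewrite !mulrA.
Qed.
End Aux.

Lemma nth_mid (w' t : seq factor) b j :
  nth FR (w' ++ FR0 b :: t) j =
  if (j < size w')%N then nth FR w' j else if j == size w' then FR0 b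
  else nth FR t (j - (size w').+1).
Proof.
rewrite nth_cat; case: ltngtP => //= h.
- have -> : (j - size w' = (j - (size w').+1).+1)%N by lia.
  by [].
- by rewrite h subnn.
Qed.

Lemma valid_step k (w' t : seq factor) a :
  valid_word k (w' ++ [:: FR0 a]) ->
  (t = [::] \/ t = [:: FR0 1] \/ t = [:: FR; FR0 1]) ->
  valid_word k.+1 (w' ++ FR0 a.+1 :: t).
Proof.
move=> [_ [hh _] hb hadj hs] ht.
have ha : (0 < a <= k)%N.
  by have := hb (size w'); rewrite nth_cat ltnn subnn size_cat /= addn1 => /(_ (ltnSn _)).
have hb' : forall j, (j < size w')%N -> (0 < alpha (nth FR w' j) <= k)%N.
  move=> j hj; have := hb j; rewrite nth_cat hj size_cat /=; apply; lia.
have hadj' : forall j, (j.+1 < size w')%N ->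
   (alpha (nth FR w' j) + alpha (nth FR w' j.+1) <= k.+1)%N.
  move=> j hj; have := hadj j; rewrite !nth_cat hj (ltnW hj) size_cat /=; apply; lia.
have hlast : (0 < size w')%N -> (alpha (nth FR w' (size w').-1) + a <= k.+1)%N.
  move=> hp; have := hadj (size w').-1.
  rewrite !nth_cat prednK // ltnn subnn size_cat /=.
  rewrite leqnn; apply; lia.
have hsum : (sumn (map alpha w') + a = size w' + k)%N.
  by move: hs; rewrite map_cat sumn_cat /= size_cat /= addn0 addn1.
have ht1 : forall j, (j < size t)%N -> alpha (nth FR t j) = 1%N.
  by case: ht => [->|[->|->]] [|[|[|j]]].
have hts : (sumn (map alpha t) = size t)%N.
  by case: ht => [->|[->|->]].
split.
- by case: w' {hh hb hadj hs hb' hadj' hlast hsum}.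
- split.
  + by case: w' hh {hb hadj hs hb' hadj' hlast hsum}.
  + rewrite last_cat /=; by case: ht => [->|[->|->]].
- move=> j hj; rewrite size_cat /= in hj; rewrite nth_mid.
  case: (ltngtP j (size w')) => hj1.
  + have := hb' j hj1; lia.
  + rewrite ht1; lia.
  + rewrite /=; lia.
- move=> j hj; rewrite size_cat /= in hj; rewrite !nth_mid.
  case: (ltngtP j.+1 (size w')) => hj1.
  + have := hadj' j hj1; have := ltnW hj1; case: (j < size w')%N; lia.
  + case: eqP => hje.
    * rewrite ht1 /=; lia.
    * rewrite !ht1; lia.
  + have := hlast (ltac:(lia)); rewrite -hj1 /=; lia.
- rewrite size_cat /= map_cat sumn_cat /= hts; lia.
Qed.

Lemma valid_split k w : valid_word k w ->
  exists w' a, w = w' ++ [:: FR0 a].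
Proof.
case: (lastP w) => [[]//|w' x] [_ [_ hl] _ _ _].
move: hl; rewrite last_rcons; case: x => // a _.
by exists w', a; rewrite cats1.
Qed.

Lemma step (A : pzRingType) (R R0 V : A) k (ws : seq (seq factor)) :
  R = R0 + R0 * V * R0 + R0 * V * R * V * R0 ->
  (forall i, (i < size ws)%N -> valid_word k (nth [::] ws i)) ->
  exists ws', (forall i, (i < size ws')%N -> valid_word k.+1 (nth [::] ws' i)) /\
    \sum_(w <- ws') eval_word R R0 V w = (\sum_(w <- ws) eval_word R R0 V w) * R.
Proof.
move=> hR; elim: ws => [|w ws IH] hv.
  by exists [::]; split => //; rewrite !big_nil mul0r.
have [ws' [hv' hs']] : exists ws', (forall i, (i < size ws')%N -> valid_word k.+1 (nth [::] ws' i)) /\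
    \sum_(w <- ws') eval_word R R0 V w = (\sum_(w <- ws) eval_word R R0 V w) * R.
  by apply: IH => i hi; apply: (hv i.+1).
have hw := hv 0%N (ltn0Sn _); rewrite /= in hw.
have [w' [a ew]] := valid_split _ _ hw; rewrite ew in hw.
exists [:: w' ++ [:: FR0 a.+1], w' ++ [:: FR0 a.+1; FR0 1],
          w' ++ [:: FR0 a.+1; FR; FR0 1] & ws']; split.
  case=> [|[|[|i]]] /= hi.
  - by apply: valid_step; auto.
  - by apply: valid_step; auto.
  - by apply: valid_step; auto.
  - by apply: hv'.
rewrite !big_cons hs' ew mulrDl.
rewrite addrA addrA; congr (_ + _).
have e1 : (w' ++ [:: FR0 a.+1; FR0 1]) = (w' ++ [:: FR0 a.+1]) ++ [:: FR0 1] by rewrite -catA.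
have e2 : (w' ++ [:: FR0 a.+1; FR; FR0 1]) = (w' ++ [:: FR0 a.+1]) ++ [:: FR; FR0 1] by rewrite -catA.
have ne : w' ++ [:: FR0 a.+1] <> [::] by case: (w').
rewrite e1 e2 (@eval_cat _ R R0 V _ _ ne) // (@eval_cat _ R R0 V _ _ ne) //.
rewrite eval_inc /= expr1.
set E := eval_word R R0 V (w' ++ [:: FR0 a]).
rewrite {2}hR !mulrDr !mulrA.
by [].
Qed.

Lemma resolvent (A : unitRingType) (X Y : A) :
  X \is a GRing.unit -> Y \is a GRing.unit ->
  X^-1 = Y^-1 + Y^-1 * (Y - X) * Y^-1 + Y^-1 * (Y - X) * X^-1 * (Y - X) * Y^-1.
Proof.
move=> hX hY.
have h1 : Y^-1 * (Y - X) * X^-1 = X^-1 - Y^-1.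
  by rewrite mulrBr mulrBl mulVr // mul1r -mulrA mulrV // mulr1.
rewrite h1 mulrBl.
have h2 : X^-1 * (Y - X) * Y^-1 = X^-1 - Y^-1.
  by rewrite mulrBr mulrBl mulVr // mul1r -mulrA mulrV // mulr1.
rewrite mulrBl h2; set a := Y^-1 * (Y - X) * Y^-1.
by rewrite -addrA (addrC a) subrK addrC subrK.
Qed.

Lemma base (A : pzRingType) (R R0 V : A) :
  R = R0 + R0 * V * R0 + R0 * V * R * V * R0 ->
  exists ws, (forall i, (i < size ws)%N -> valid_word 1 (nth [::] ws i)) /\
    R ^+ 1 = \sum_(w <- ws) eval_word R R0 V w.
Proof.
move=> hR.
exists [:: [:: FR0 1]; [:: FR0 1; FR0 1]; [:: FR0 1; FR; FR0 1]]; split.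
  case=> [|[|[|i]]] //= _; split => //= j hj;
    by case: j hj => [|[|[|j]]].
rewrite !big_cons big_nil addr0 /= !expr1 !mulrA addrA; exact: hR.
Qed.

Theorem lemma4p2 (K : numClosedFieldType) (A : unitAlgType K)
  (G G0 : A) (z : K) (k : nat)
  (hk : (1 <= k)%N) (hz : z \notin Num.real)
  (hG : G - z%:A \is a GRing.unit) (hG0 : G0 - z%:A \is a GRing.unit) :
  exists ws : seq (seq factor),
    (forall i, (i < size ws)%N -> valid_word k (nth [::] ws i)) /\
    ((G - z%:A)^-1) ^+ k =
      \sum_(w <- ws) eval_word ((G - z%:A)^-1) ((G0 - z%:A)^-1) (G0 - G) w.
Proof.
set R := (G - z%:A)^-1; set R0 := (G0 - z%:A)^-1; set V := G0 - G.
have hR : R = R0 + R0 * V * R0 + R0 * V * R * V * R0.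
  have -> : V = (G0 - z%:A) - (G - z%:A).
    by rewrite /V opprB addrA subrK.
  exact: resolvent.
elim: k hk => [//|k IH] _.
case: k IH => [|k] IH.
  exact: base.
have [ws [hv hs]] := IH isT.
have [ws' [hv' hs']] := @step _ R R0 V k.+1 ws hR hv.
exists ws'; split => //.
by rewrite exprSr hs hs'.
Qed.
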